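(* Let $n\ge1$, suppose $\mathcal M$ is injective on $\Omega$, and let $W=(w_1,u_1,\dots,w_n,u_n,\sigma)\in\Omega$ and $M=\mathcal M(W)$. Define $$g(u;W)=\Delta_{2n+1}(u,\sigma)-\sum_{j=0}^{2n}a_j(M)\Delta_j(u,\sigma).$$ Then there is a real number $\tilde u(W)$ such that $$g(u;W)=(u-u_1)^2\cdots(u-u_n)^2(u-\tilde u(W)).$$
   Context: Let $\mathcal K:\mathbb R\to[0,\infty)$ be a kernel with $\mathfrak m_j:=\int_{\mathbb R}\xi^j\mathcal K(\xi)\,d\xi<\infty$ for all $j$; normalized: $\mathfrak m_0=1,\mathfrak m_1=0,\mathfrak m_2=1$. Let $\Delta_j(u,\sigma)=\int\xi^j\frac1\sigma\mathcal K(\frac{\xi-u}{\sigma})d\xi=\sum_{k=0}^j\binom jk\mathfrak m_k\sigma^ku^{j-k}$, a polynomial in $u$. For $W=(w_1,u_1,\dots,w_n,u_n,\sigma)$, $\mathcal M(W)=(M_0,\dots,M_{2n})^T$ with $M_j=\sum_{i=1}^nw_i\Delta_j(u_i,\sigma)$; $\Omega=\{W:w_i>0\ \forall i,\ u_1<\dots<u_n,\ \sigma>0\}$. On $\mathcal M(\Omega)$, $\mathcal M_{2n+1}(M)=\sum_iw_i\Delta_{2n+1}(u_i,\sigma)$ with $W=\mathcal M^{-1}(M)$, and $a_j(M)=\partial\mathcal M_{2n+1}/\partial M_j$, $j=0,\dots,2n$. *)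

(* Defs.v *)
From HB Require Import structures.
From mathcomp Require Import all_boot all_order all_algebra.
From mathcomp Require Import all_classical all_reals all_analysis.
Set Implicit Arguments.
Unset Strict Implicit.
Unset Printing Implicit Defensive.
Import Order.TTheory GRing.Theory Num.Theory.
Import numFieldNormedType.Exports.

Local Open Scope classical_set_scope.
Local Open Scope ring_scope.

Section Defs.
Variable R : realType.

Definition moment (K : R -> R) (j : nat) : R :=
  \int[@lebesgue_measure R]_(x in [set: R]) (x ^+ j * K x).

Definition Delta (K : R -> R) (j : nat) (u s : R) : R :=
  \sum_(k < j.+1) ('C(j, k))%:R * moment K k * s ^+ k * u ^+ (j - k).

(* Parameters W = (w_1,u_1,...,w_n,u_n,sigma) are represented by (w, u, s). *)
Definition Mj (K : R -> R) (n : nat) (w u : 'I_n -> R) (s : R) (j : nat) : R :=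
  \sum_(i < n) w i * Delta K j (u i) s.

Definition Mvec (K : R -> R) (n : nat) (w u : 'I_n -> R) (s : R)
  : 'rV[R]_((2 * n).+1) :=
  \row_(j < (2 * n).+1) Mj K w u s j.

Definition inOmega (n : nat) (w u : 'I_n -> R) (s : R) : Prop :=
  (forall i, 0 < w i) /\ (forall i j : 'I_n, (i < j)%N -> u i < u j) /\ 0 < s.

Definition Minj_on_Omega (K : R -> R) (n : nat) : Prop :=
  forall (w u w' u' : 'I_n -> R) (s s' : R),
    inOmega w u s -> inOmega w' u' s' ->
    Mvec K w u s = Mvec K w' u' s' -> w = w' /\ u = u' /\ s = s'.

(* M_{2n+1} on M(Omega):  M |-> sum_i w_i Delta_{2n+1}(u_i, sigma) with
   W = M^{-1}(M); (arbitrary value 0 outside M(Omega)). *)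
Definition Mnext (K : R -> R) (n : nat) (m : 'rV[R]_((2 * n).+1)) : R :=
  match pselect (exists p : ('I_n -> R) * ('I_n -> R) * R,
                   inOmega p.1.1 p.1.2 p.2 /\ Mvec K p.1.1 p.1.2 p.2 = m) with
  | left H => let p := projT1 (cid H) in Mj K p.1.1 p.1.2 p.2 (2 * n).+1
  | right _ => 0
  end.

(* a_j(M) = partial derivative of M_{2n+1} with respect to M_j *)
Definition acoef (K : R -> R) (n : nat) (m : 'rV[R]_((2 * n).+1))
  (j : 'I_((2 * n).+1)) : R :=
  derive (@Mnext K n) m (delta_mx 0 j).

Definition gfun (K : R -> R) (n : nat) (w u : 'I_n -> R) (s : R) (x : R) : R :=
  Delta K (2 * n).+1 x s
  - \sum_(j < (2 * n).+1) acoef K (Mvec K w u s) j * Delta K j x s.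

End Defs.
Arguments Mnext {R} K n m.
Arguments acoef {R} K {n} m j.

(* Main.v *)
Require Import Defs.
From HB Require Import structures.
From mathcomp Require Import all_boot all_order all_algebra.
From mathcomp Require Import all_classical all_reals all_analysis.
From mathcomp Require Import zify ring lra.
Import Order.TTheory GRing.Theory Num.Theory.
Import numFieldNormedType.Exports.
Local Open Scope classical_set_scope.
Local Open Scope ring_scope.

Lemma sum_pick (F : fieldType) n (i : 'I_n) (f : 'I_n -> F) :
  \sum_k f k *+ (k == i) = f i.
Proof.
rewrite (bigD1 i) //= eqxx mulr1n big1 ?addr0 // => k /negbTE ->.
by rewrite mulr0n.
Qed.

Lemma factor_lemma (F : fieldType) n (u : 'I_n -> F) (G : {poly F}) :
  injective u -> G \is monic -> size G = (2 * n).+2 ->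
  (forall i, root G (u i)) -> (forall i, root G^`() (u i)) ->
  exists c, G = (\prod_i ('X - (u i)%:P)) ^+ 2 * ('X - c%:P).
Proof.
move=> inju mG sG r0 r1.
pose P := \prod_i ('X - (u i)%:P).
have PE : P = \prod_(z <- map u (enum 'I_n)) ('X - z%:P).
  by rewrite big_map big_enum.
have uq : uniq_roots (map u (enum 'I_n)).
  by rewrite uniq_rootsE map_inj_uniq ?enum_uniq.
have dvdP q : (forall i, root q (u i)) -> P %| q.
  move=> hq; rewrite PE; apply: uniq_roots_dvdp => //.
  by apply/allP => z /mapP [i _ ->]; apply: hq.
have [Q GE] := dvdpP _ _ (dvdP _ r0).
have P0 i : P.[u i] = 0.
  by rewrite horner_prod (bigD1 i) //= hornerXsubC subrr mul0r.
have P1 i : P^`().[u i] != 0.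
  rewrite /P (bigD1 i) //= derivM derivXsubC mul1r hornerD hornerM.
  rewrite hornerXsubC subrr mul0r addr0 horner_prod.
  apply/prodf_neq0 => j ji; rewrite hornerXsubC subr_eq0.
  by apply/eqP => /inju /eqP; rewrite eq_sym (negbTE ji).
have rQ i : root Q (u i).
  have := r1 i; rewrite /root GE derivM hornerD !hornerM P0 mulr0 add0r.
  by rewrite mulf_eq0 (negbTE (P1 i)) orbF.
have [Q2 QE] := dvdpP _ _ (dvdP _ rQ).
have mP : P \is monic by apply: monic_prod_XsubC.
have sP : size P = n.+1 by rewrite PE size_prod_XsubC size_map size_enum_ord.
have mPP : P * P \is monic by rewrite monicMr.
have sPP : size (P * P) = (2 * n).+1.
  by rewrite size_monicM ?sP ?monic_neq0 //=; lia.
have GE2 : G = Q2 * (P * P) by rewrite GE QE mulrA.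
have mQ2 : Q2 \is monic by rewrite -(monicMr _ mPP) -GE2.
have sQ2 : size Q2 = 2.
  move: sG; rewrite GE2 size_Mmonic ?monic_neq0 // sPP.
  lia.
exists (- Q2`_0).
have Q2E : Q2 = 'X - (- Q2`_0)%:P.
  apply/polyP => k; rewrite coefB coefX coefC.
  case: k => [|[|k]] /=; first by rewrite sub0r opprK.
    by move: mQ2; rewrite monicE /lead_coef sQ2 => /eqP ->; rewrite subr0.
  by rewrite subr0 nth_default // sQ2.
by rewrite {1}GE2 {1}Q2E mulrC expr2.
Qed.

Lemma key (R : realType) (k : nat) (F : 'rV[R]_k -> R) (m0 : 'rV[R]_k)
  (Q : 'I_k -> {poly R}) (Qr : {poly R}) :
  differentiable F m0 ->
  (\row_j (Q j).[0]) = m0 ->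
  (\forall t \near (0:R), F (\row_j (Q j).[t]) = Qr.[t]) ->
  Qr^`().[0] = \sum_j (Q j)^`().[0] * 'D_(delta_mx 0 j) F m0.
Proof.
move=> dF hm0 hnear.
pose h := fun t : R => \row_j (Q j).[t].
have hE : h = \sum_j (fun t => (Q j).[t] *: (delta_mx 0 j : 'rV[R]_k)).
  apply/funext => t; rewrite fct_sumE {1}(row_sum_delta (h t)).
  by apply: eq_bigr => j _; rewrite /h mxE.
have dk j : differentiable (horner (Q j)) (0:R).
  exact/derivable1_diffP/derivable_horner.
have dterm j : differentiable (fun t => (Q j).[t] *: (delta_mx 0 j : 'rV[R]_k)) (0:R).
  exact: differentiableZl.
have dh : differentiable h 0 by rewrite hE; apply: differentiable_sum.
have dF' : differentiable F (h 0) by rewrite /h hm0.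
have -> : Qr^`().[0] = 'D_1 (horner Qr) 0 by rewrite derive_val.
have -> : 'D_1 (horner Qr) 0 = 'D_1 (F \o h) 0.
  by apply: near_eq_derive; near=> t; rewrite /= -(near hnear t).
rewrite deriveE; last exact: differentiable_comp.
rewrite diff_comp // /=.
have -> : 'd h 0 1 = \sum_j (Q j)^`().[0] *: (delta_mx 0 j : 'rV[R]_k).
  rewrite -deriveE // hE derive_sum; last by move=> j; apply: diff_derivable.
  apply: eq_bigr => j _; rewrite deriveE // diffZl //=; congr (_ *: _).
  by rewrite -deriveE // derive_val.
rewrite linear_sum; apply: eq_bigr => j _.
by rewrite linearZ /= (_ : h 0 = m0) // deriveE.
Unshelve. all: by end_near.
Qed.

Definition DeltaP (R : realType) (K : R -> R) (j : nat) (s : R) : {poly R} :=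
  \sum_(k < j.+1) ('C(j, k)%:R * Defs.moment K k * s ^+ k) *: 'X^(j - k).
Arguments DeltaP {R}.

Lemma DeltaE (R : realType) (K : R -> R) j x s :
  Defs.Delta K j x s = (DeltaP K j s).[x].
Proof.
rewrite /Defs.Delta /DeltaP horner_sum; apply: eq_bigr => k _.
by rewrite hornerZ hornerXn.
Qed.

Lemma size_DeltaP (R : realType) (K : R -> R) j s :
  (size (DeltaP K j s) <= j.+1)%N.
Proof.
rewrite /DeltaP; apply: (big_ind (fun p : {poly R} => size p <= j.+1)%N).
- by rewrite size_poly0.
- by move=> p q hp hq; apply: leq_trans (size_add _ _) _; rewrite geq_max hp hq.
- move=> k _; apply: leq_trans (size_scale_leq _ _) _.
  by rewrite size_polyXn ltnS leq_subr.
Qed.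

Lemma DeltaP_top (R : realType) (K : R -> R) N s : Defs.moment K 0 = 1 ->
  exists2 E : {poly R}, DeltaP K N s = 'X^N + E & (size E <= N)%N.
Proof.
move=> hm0; rewrite /DeltaP big_ord_recl /= bin0 hm0 expr0 !mulr1 subn0 scale1r.
eexists; first reflexivity.
apply: (big_ind (fun p : {poly R} => size p <= N)%N).
- by rewrite size_poly0.
- by move=> p q hp hq; apply: leq_trans (size_add _ _) _; rewrite geq_max hp hq.
- move=> k _; apply: leq_trans (size_scale_leq _ _) _.
  rewrite size_polyXn /bump /=; case: N k => [|N'] k /=; first by case: k.
  by rewrite add1n subSS ltnS leq_subr.
Qed.

Lemma MnextE (R : realType) (K : R -> R) n (hinj : Minj_on_Omega K n) w u s :
  inOmega w u s -> Mnext K n (Mvec K w u s) = Mj K w u s (2 * n).+1.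
Proof.
move=> hW; rewrite /Mnext; case: pselect => [H|H]; last first.
  by exfalso; apply: H; exists (w, u, s).
case: (cid H) => [[[w' u'] s'] /= [hW' hM]].
by have [-> [-> ->]] := hinj _ _ _ _ _ _ hW' hW hM.
Qed.

Lemma termw_eval (R : realType) (b : bool) (a c t : R) :
  ((a%:P + 'X *+ b) * c%:P).[t] = (a + t *+ b) * c.
Proof. by case: b; rewrite !hornerE. Qed.

Lemma termw_der (R : realType) (b : bool) (a c : R) :
  ((a%:P + 'X *+ b) * c%:P)^`().[0] = c *+ b.
Proof.
by case: b; rewrite !(derivM, derivD, derivC, derivX, derivMn, hornerE).
Qed.

Lemma termu_eval (R : realType) (b : bool) (p : {poly R}) (a c t : R) :
  (a *: (p \Po ('X *+ b + c%:P))).[t] = a * p.[t *+ b + c].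
Proof. by case: b; rewrite hornerZ horner_comp !hornerE. Qed.

Lemma termu_der (R : realType) (b : bool) (p : {poly R}) (a c : R) :
  (a *: (p \Po ('X *+ b + c%:P)))^`().[0] = a * p^`().[c] *+ b.
Proof.
case: b; rewrite derivZ deriv_comp hornerZ hornerM horner_comp
  !(derivD, derivC, derivX, derivMn, hornerE) //=.
  by rewrite mulr1.
by rewrite mulr0.
Qed.

Theorem proposition4p1 (R : realType) (K : R -> R) (n : nat)
  (hK0 : forall x, 0 <= K x)
  (hKint : forall j : nat,
     (@lebesgue_measure R).-integrable [set: R] (fun x => (x ^+ j * K x)%:E))
  (hm0 : moment K 0 = 1) (hm1 : moment K 1 = 0) (hm2 : moment K 2 = 1)
  (hn : (1 <= n)%N)
  (hinj : Minj_on_Omega K n)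
  (w u : 'I_n -> R) (s : R) (hW : inOmega w u s)
  (hdiff : differentiable (Mnext K n) (Mvec K w u s)) :
  exists ut : R, forall x : R,
    gfun K w u s x = (\prod_(i < n) (x - u i) ^+ 2) * (x - ut).
Proof.
Proof.
have hW0 := hW.
case: hW => [hw [hu hs]].
set m0 := Mvec K w u s.
pose N := (2 * n).+1.
pose a := acoef K m0.
pose G := DeltaP K N s - \sum_(j < N) a j *: DeltaP K j s.
have gE x : gfun K w u s x = G.[x].
  rewrite /gfun /G hornerD hornerN DeltaE; congr (_ - _).
  by rewrite horner_sum; apply: eq_bigr => j _; rewrite hornerZ DeltaE.
have injU : injective u.
  move=> i j E; apply: val_inj; case: (ltngtP i j) => // h.
    by have := hu _ _ h; rewrite E ltxx.
  by have := hu _ _ h; rewrite E ltxx.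
have r0 i : root G (u i).
  pose Q := fun j : nat =>
    \sum_k ((w k)%:P + 'X *+ (k == i)) * (Defs.Delta K j (u k) s)%:P.
  have Qev j t : (Q j).[t] = Mj K (fun k => w k + t *+ (k == i)) u s j.
    by rewrite /Q horner_sum /Mj; apply: eq_bigr => k _; rewrite termw_eval.
  have Qder j : (Q j)^`().[0] = Defs.Delta K j (u i) s.
    rewrite /Q raddf_sum horner_sum.
    rewrite -(@sum_pick _ _ i (fun k => Defs.Delta K j (u k) s)).
    by apply: eq_bigr => k _; rewrite termw_der.
  have := @key R N (Mnext K n) m0 (fun j : 'I_N => Q j) (Q N) hdiff.
  have row0 : \row_(j < N) (Q j).[0] = m0.
    apply/rowP => j; rewrite !mxE Qev /Mj; apply: eq_bigr => k _.
    by rewrite mul0rn addr0.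
  have nr : \forall t \near (0:R), Mnext K n (\row_(j < N) (Q j).[t]) = (Q N).[t].
    apply: filterS (nbhs0_lt (hw i)) => t ht.
    have hW' : inOmega (fun k => w k + t *+ (k == i)) u s.
      split; last by split.
      move=> k; case: eqP => [->|_]; last by rewrite mulr0n addr0.
      rewrite mulr1n; move: ht; rewrite ltr_norml => /andP [h1 _]; lra.
    rewrite (_ : \row_(j < N) (Q j).[t] = Mvec K (fun k => w k + t *+ (k == i)) u s).
      by rewrite MnextE // Qev.
    by apply/rowP => j; rewrite !mxE Qev.
  move=> /(_ row0 nr); rewrite Qder.
  under eq_bigr => j _ do rewrite Qder.
  move=> H; rewrite /root /G hornerD hornerN -DeltaE H subr_eq0 horner_sum.
  apply/eqP; apply: eq_bigr => j _; rewrite hornerZ -DeltaE mulrC //.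
have r1 i : root G^`() (u i).
  pose Q := fun j : nat =>
    \sum_k w k *: (DeltaP K j s \Po ('X *+ (k == i) + (u k)%:P)).
  have Qev j t : (Q j).[t] = Mj K w (fun k => t *+ (k == i) + u k) s j.
    rewrite /Q horner_sum /Mj; apply: eq_bigr => k _.
    by rewrite termu_eval DeltaE.
  have Qder j : (Q j)^`().[0] = w i * (DeltaP K j s)^`().[u i].
    rewrite /Q raddf_sum horner_sum.
    rewrite -(@sum_pick _ _ i (fun k => w k * (DeltaP K j s)^`().[u k])).
    by apply: eq_bigr => k _; rewrite termu_der.
  have := @key R N (Mnext K n) m0 (fun j : 'I_N => Q j) (Q N) hdiff.
  have row0 : \row_(j < N) (Q j).[0] = m0.
    apply/rowP => j; rewrite !mxE Qev /Mj; apply: eq_bigr => k _.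
    by rewrite mul0rn add0r.
  have hall : \forall t \near (0:R), forall p : 'I_n * 'I_n,
      (p.1 < p.2)%N -> `|t| < u p.2 - u p.1.
    refine (@filter_forall R _ (fun (p : 'I_n * 'I_n) (t : R) =>
      (p.1 < p.2)%N -> `|t| < u p.2 - u p.1) (nbhs (0:R)) _ _) => -[c d] /=.
    case hcd : (c < d)%N; last by apply: filterE.
    apply: filterS (nbhs0_lt _) => [t ht _|]; first exact: ht.
    by rewrite subr_gt0 hu.
  have nr : \forall t \near (0:R), Mnext K n (\row_(j < N) (Q j).[t]) = (Q N).[t].
    apply: filterS hall => t ht.
    have hW' : inOmega w (fun k => t *+ (k == i) + u k) s.
      split=> //; split=> // c d hcd.
      have := ht (c, d) hcd => /= hlt.
      have := ler_norm t; have := ler_norm (- t); rewrite normrN => h1 h2.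
      rewrite /=; case: (eqVneq c i) => [ci|ci]; case: (eqVneq d i) => [di|di].
      - by move: hcd; rewrite ci di ltnn.
      - rewrite mulr1n mulr0n add0r; lra.
      - rewrite mulr1n mulr0n add0r; lra.
      - rewrite !mulr0n !add0r; exact: hu.
    rewrite (_ : \row_(j < N) (Q j).[t] = Mvec K w (fun k => t *+ (k == i) + u k) s).
      by rewrite MnextE // Qev.
    by apply/rowP => j; rewrite !mxE Qev.
  move=> /(_ row0 nr); rewrite Qder.
  under eq_bigr => j _ do rewrite Qder.
  move=> H; have wi0 : w i != 0 by rewrite gt_eqF.
  have SE : (\sum_(j < N) a j *: DeltaP K j s)^`() =
      \sum_(j < N) a j *: (DeltaP K j s)^`().
    by rewrite raddf_sum; apply: eq_bigr => j _; exact: derivZ.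
  rewrite /root /G derivB hornerD hornerN SE [X in _ - X]horner_sum.
  apply/eqP; apply: (mulfI wi0); rewrite mulr0 mulrBr H mulr_sumr.
  apply/eqP; rewrite subr_eq0; apply/eqP; apply: eq_bigr => j _.
  rewrite hornerZ (_ : 'D_(delta_mx 0 j) (Mnext K n) m0 = a j) //; ring.
have [E DE sE] := @DeltaP_top R K N s hm0.
have sR : (size (E - \sum_(j < N) a j *: DeltaP K j s)%R <= N)%N.
  apply: leq_trans (size_add _ _) _; rewrite geq_max sE size_opp /=.
  apply: (big_ind (fun p : {poly R} => size p <= N)%N).
  - by rewrite size_poly0.
  - by move=> p q hp hq; apply: leq_trans (size_add _ _) _; rewrite geq_max hp hq.
  - move=> j _; apply: leq_trans (size_scale_leq _ _) _.
    exact: leq_trans (@size_DeltaP R K j s) (ltn_ord j).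
have GE : G = 'X^N + (E - \sum_(j < N) a j *: DeltaP K j s).
  by rewrite /G DE addrA.
have mG : G \is monic.
  by rewrite monicE GE lead_coefDl ?size_polyXn ?lead_coefXn // ltnS.
have sG : size G = (2 * n).+2.
  by rewrite GE size_addl ?size_polyXn // ltnS.
have [c GE'] := @factor_lemma R n u G injU mG sG r0 r1.
exists c => x.
rewrite gE GE' hornerM horner_exp horner_prod hornerXsubC prodrXl.
by congr (_ ^+ 2 * _); apply: eq_bigr => i _; rewrite hornerXsubC.
Qed.
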